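(* Let $G$ be a finite group. Then $G$ contains an element whose order is a composite number if and only if $g(OD(G))=3$.
   Context: For a finite group $G$, $o(x)$ denotes the order of $x\in G$. The order-divisor graph $OD(G)$ is the simple undirected graph with vertex set $G$, in which two distinct vertices $x,y$ are adjacent if and only if $o(x)\neq o(y)$ and either $o(x)\mid o(y)$ or $o(y)\mid o(x)$. The girth $g(\Gamma)$ of a graph $\Gamma$ is the length of a shortest cycle in $\Gamma$ (taken to be $0$ if $\Gamma$ has no cycle). *)

(* Defs.v *)
From mathcomp Require Import all_boot all_fingroup.
Set Implicit Arguments. Unset Strict Implicit. Unset Printing Implicit Defensive.

Definition composite (n : nat) : bool := (1 < n) && ~~ prime n.

Definition od_adj (gT : finGroupType) : rel gT :=
  fun x y => [&& x != y, #[x]%g != #[y]%g & (#[x]%g %| #[y]%g) || (#[y]%g %| #[x]%g)].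

Definition has_cycle_len (T : finType) (e : rel T) (k : nat) : bool :=
  (2 < k) && [exists t : k.-tuple T, uniq t && path.cycle e t].

(* Girth: least length of a cycle, 0 if there is no cycle.  A cycle has
   distinct vertices, so its length is at most #|T|. *)
Definition girth (T : finType) (e : rel T) : nat :=
  head 0 [seq k <- iota 0 #|T|.+1 | has_cycle_len e k].

(* Main.v *)
Require Import Defs.
From mathcomp Require Import all_boot all_fingroup.
From mathcomp Require Import all_solvable.
From mathcomp Require Import zify.

Lemma chain_comp u v w : u %| v -> v %| w -> u != v -> v != w -> 0 < w -> composite w.
Proof.
move=> uv vw nuv nvw w0.
have v0 : 0 < v by apply: dvdn_gt0 vw.
have u0 : 0 < u by apply: dvdn_gt0 uv.
have luv : u < v by rewrite ltn_neqAle nuv dvdn_leq.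
have lvw : v < w by rewrite ltn_neqAle nvw dvdn_leq.
have v1 : 1 < v by apply: leq_trans luv.
apply/andP; split; first by apply: ltn_trans lvw.
apply/negP=> pw.
have := prime_nt_dvdP pw _ vw.
have hv1 : v != 1 by rewrite neq_ltn v1 orbT.
by move=> /(_ hv1) e; rewrite e eqxx in nvw.
Qed.

Lemma tri_comp a b c : 0 < a -> 0 < b -> 0 < c -> a != b -> b != c -> c != a ->
  (a %| b) || (b %| a) -> (b %| c) || (c %| b) -> (c %| a) || (a %| c) ->
  [|| composite a, composite b | composite c].
Proof.
move=> a0 b0 c0 nab nbc nca.
have nba : b != a by rewrite eq_sym.
have ncb : c != b by rewrite eq_sym.
have nac : a != c by rewrite eq_sym.
case/orP=> h1; case/orP=> h2; case/orP=> h3;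
first [ by rewrite (chain_comp _ _ _ h1 h2) ?orbT
      | by rewrite (chain_comp _ _ _ h2 h3) ?orbT
      | by rewrite (chain_comp _ _ _ h3 h1) ?orbT
      | by rewrite (chain_comp _ _ _ h1 h3) ?orbT
      | by rewrite (chain_comp _ _ _ h3 h2) ?orbT
      | by rewrite (chain_comp _ _ _ h2 h1) ?orbT ].
Qed.

Theorem mainTheorem4 (gT : finGroupType) :
  (exists x : gT, composite #[x]%g) <-> girth (@od_adj gT) = 3.
Proof.
have girthE : girth (@od_adj gT) = 3 <-> has_cycle_len (@od_adj gT) 3.
  split.
    rewrite /girth => h.
    have : 3 \in [seq k <- iota 0 #|gT|.+1 | has_cycle_len (@od_adj gT) k].
      move: h; case: [seq k <- _ | _] => //= k s ->; exact: mem_head.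
    by rewrite mem_filter => /andP[].
  move=> h; have h' := h; move: h' => /andP[_ /existsP[t /andP[ut _]]].
  have hc : 3 <= #|gT|.
    by rewrite -(size_tuple t) -(card_uniqP ut) max_card.
  rewrite /girth.
  have -> : #|gT|.+1 = (#|gT| - 3).+4 by move: hc; clear; lia.
  by rewrite /= h.
rewrite girthE; split.
  case=> x /andP[n1 np].
  set n := #[x]%g in n1 np.
  set p := pdiv n.
  have pp : prime p by apply: pdiv_prime.
  have pn : p %| n by apply: pdiv_dvd.
  have p0 : 0 < p by apply: prime_gt0.
  have ndp : n %/ p %| n by apply: dvdn_div.
  have op : #[x ^+ (n %/ p)]%g = p.
    rewrite orderXdiv //.
    rewrite -/n -{1}(divnK pn) mulKn // divn_gt0 //; apply: dvdn_leq => //; exact: ltnW.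
  have pne : p != n by apply/eqP => e; rewrite -e pp in np.
  have p1 : p != 1 by rewrite neq_ltn prime_gt1 ?orbT.
  apply/andP; split => //; apply/existsP.
  exists [tuple 1%g; (x ^+ (n %/ p))%g; x].
  set y := (x ^+ (n %/ p))%g in op *.
  have d1 : (1%g == y) = false.
    apply/negbTE/negP => /eqP ee; move: op; rewrite -ee order1 => e1; by rewrite -e1 eqxx in p1.
  have d2 : (1%g == x) = false.
    by apply/negbTE/negP => /eqP ee; move: n1; rewrite /n -ee order1.
  have d3 : (y == x) = false.
    by apply/negbTE/negP => /eqP ee; move: op; rewrite ee -/n => e1; rewrite e1 eqxx in pne.
  rewrite /= /od_adj /= op order1 -/n !inE d1 d2 d3 /=.
  rewrite eq_sym p1 pne dvd1n pn /= eq_sym d2 /= dvd1n orbT andbT.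
  by rewrite neq_ltn n1 orbT.
case/andP=> _ /existsP[t /andP[ut ct]].
case: t ut ct => [[|a [|b [|c []]]] //] Ht /=.
rewrite /od_adj /= => _.
case/and4P=> /and3P[_ nab dab] /and3P[_ nbc dbc] /and3P[_ nca dca] _.
have := tri_comp _ _ _ (order_gt0 a) (order_gt0 b) (order_gt0 c) nab nbc nca dab dbc dca.
by case/or3P; eauto.
Qed.
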